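(* For the relay Markov decision process $\{(Y_n,A_n),n\ge0\}$ described in the context, there exists a stationary policy $u^*$ that minimizes the long-run average cost $V(u)=\lim_{N\to\infty}\frac{1}{N+1}E_u\big[\sum_{n=0}^N C(Y_n,A_n)\,\big|\,Y_0=(0,0)\big]$.
   Context: A relay node keeps two queues $q_1,q_2$. Time is slotted; in each slot a packet arrives to $q_i$ with probability $p_i$ ($i=1,2$), independently across queues and slots, at most one per queue per slot. $Y_n=(Y_n^1,Y_n^2)$ is the number of packets in $(q_1,q_2)$ at the end of slot $n$ just before the transmission opportunity, and $A_n\in\{0,1\}$ is the action ($0$ = do nothing, $1$ = transmit). If $Y^1_n+Y^2_n=0$ then $A_n=0$; if $Y^1_nY^2_n>0$ then $A_n=1$ (XOR-coded transmission of one packet from each queue). The state space is $\{(i,j)\in\mathbb{Z}_{\ge0}^2:\min(i,j)\le1\}$. With $\hat p_1=(1-p_1)(1-p_2)$, $\hat p_2=p_1(1-p_2)$, $\hat p_3=(1-p_1)p_2$, $\hat p_4=p_1p_2$, $[x]^+=\max(x,0)$: $P_1((i,j),([i-1]^+,[j-1]^+))=\hat p_1$, $P_1((i,j),(\max(i,1),[j-1]^+))=\hat p_2$, $P_1((i,j),([i-1]^+,\max(j,1)))=\hat p_3$, $P_1((i,j),(\max(i,1),\max(j,1)))=\hat p_4$, $P_0((i,j),(i,j))=\hat p_1$, $P_0((i,j),(i+1,j))=\hat p_2$, $P_0((i,j),(i,j+1))=\hat p_3$, $P_0((i,j),(i+1,j+1))=\hat p_4$. One-step cost: $C(Y_n,A_n)=C_h([Y^1_n-A_n]^+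 + [Y^2_n-A_n]^+)+C_tA_n$, where $C_t>0$ is the transmission cost and $C_h>0$ the per-slot holding cost. *)

(* Defs.v *)
From Stdlib Require Import Reals List.
From Coquelicot Require Import Coquelicot.
Import ListNotations.
Open Scope R_scope.

(* States (i,j) : number of packets in (q1,q2). Actions: false = 0 (idle), true = 1 (transmit). *)
Definition state := (nat * nat)%type.
Definition act_nat (a : bool) : nat := if a then 1%nat else 0%nat.

Definition trans (p1 p2 : R) (y : state) (a : bool) : list (R * state) :=
  let '(i, j) := y in
  let ph1 := (1 - p1) * (1 - p2) in
  let ph2 := p1 * (1 - p2) in
  let ph3 := (1 - p1) * p2 in
  let ph4 := p1 * p2 in
  if a then
    [ (ph1, (i - 1, j - 1)%nat);
      (ph2, (Nat.max i 1, j - 1)%nat);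
      (ph3, (i - 1, Nat.max j 1)%nat);
      (ph4, (Nat.max i 1, Nat.max j 1)) ]
  else
    [ (ph1, (i, j)); (ph2, (S i, j)); (ph3, (i, S j)); (ph4, (S i, S j)) ].

(* one-step cost C(y,a) = Ch([i-a]^+ + [j-a]^+) + Ct a  (nat subtraction is truncated) *)
Definition cost (Ch Ct : R) (y : state) (a : bool) : R :=
  Ch * INR ((fst y - act_nat a) + (snd y - act_nat a))%nat + Ct * INR (act_nat a).

(* A (history-dependent, randomized) policy: given the past history
   [(Y_0,A_0); ...; (Y_{n-1},A_{n-1})] and the current state Y_n, the
   probability of choosing A_n = 1. *)
Definition history := list (state * bool).
Definition policy := history -> state -> R.

Definition admissible (u : policy) : Prop :=
  forall (h : history) (y : state),
    0 <= u h y <= 1 /\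
    ((fst y + snd y)%nat = 0%nat -> u h y = 0) /\
    ((0 < fst y * snd y)%nat -> u h y = 1).

Definition stationary (u : policy) : Prop :=
  exists f : state -> R, forall h y, u h y = f y.

Fixpoint sum_next (l : list (R * state)) (g : state -> R) : R :=
  match l with
  | [] => 0
  | (q, y') :: l' => q * g y' + sum_next l' g
  end.

(* ecost N u h y = E_u[ sum_{n=k}^{k+N} C(Y_n,A_n) | past history h, Y_k = y ] *)
Fixpoint ecost (p1 p2 Ch Ct : R) (u : policy) (N : nat) (h : history) (y : state) : R :=
  let q := u h y in
  match N with
  | O => q * cost Ch Ct y true + (1 - q) * cost Ch Ct y false
  | S N' =>
      q * (cost Ch Ct y true +
           sum_next (trans p1 p2 y true)
             (fun y' => ecost p1 p2 Ch Ct u N' (h ++ [(y, true)]) y'))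
    + (1 - q) * (cost Ch Ct y false +
           sum_next (trans p1 p2 y false)
             (fun y' => ecost p1 p2 Ch Ct u N' (h ++ [(y, false)]) y'))
  end.

Definition avg_cost (p1 p2 Ch Ct : R) (u : policy) (N : nat) : R :=
  ecost p1 p2 Ch Ct u N [] (0%nat, 0%nat) / INR (S N).

Definition V (p1 p2 Ch Ct : R) (u : policy) : Rbar :=
  LimSup_seq (avg_cost p1 p2 Ch Ct u).

(* Main.v *)
Require Import Defs.
From Stdlib Require Import Reals List Lra Lia.
From Coquelicot Require Import Coquelicot.
Import ListNotations.
Open Scope R_scope.

Definition tt (Ch Ct q g : R) (k : nat) : R :=
  ((Ch * INR k + q * Ct - g) - Rabs (Ch * INR k + q * Ct - g)) / 2.

Fixpoint xrec (mu lam Ch Ct q g : R) (n i : nat) : R :=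
  match n with
  | O => 0
  | S n' => (lam * xrec mu lam Ch Ct q g n' (S i) + tt Ch Ct q g i) / mu
  end.

Definition Dg (mu lam Ch Ct q g : R) (M i : nat) : R :=
  if Nat.leb i M then Ct + (if Rlt_dec 0 mu then xrec mu lam Ch Ct q g (S M - i) i else 0)
  else 0.

Lemma tt_le0 Ch Ct q g k : tt Ch Ct q g k <= 0.
Proof. unfold tt. destruct (Rcase_abs (Ch * INR k + q * Ct - g)).
  rewrite Rabs_left; lra. rewrite Rabs_right; lra. Qed.

Lemma tt_le_a Ch Ct q g k : tt Ch Ct q g k <= Ch * INR k + q * Ct - g.
Proof. unfold tt. destruct (Rcase_abs (Ch * INR k + q * Ct - g)).
  rewrite Rabs_left; lra. rewrite Rabs_right; lra. Qed.

Lemma tt_eq_a Ch Ct q g k : Ch * INR k + q * Ct - g <= 0 -> tt Ch Ct q g k = Ch * INR k + q * Ct - g.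
Proof. intro H. unfold tt. destruct (Rcase_abs (Ch * INR k + q * Ct - g)).
  rewrite Rabs_left; lra. rewrite Rabs_right; lra. Qed.

Lemma tt_zero Ch Ct q g k : 0 <= Ch * INR k + q * Ct - g -> tt Ch Ct q g k = 0.
Proof. intro H. unfold tt. rewrite Rabs_right; lra. Qed.

Lemma xrec_le0 mu lam Ch Ct q g : 0 < mu -> 0 <= lam -> forall n i, xrec mu lam Ch Ct q g n i <= 0.
Proof. intros Hmu Hlam n. induction n as [|n IH]; intro i; simpl. lra.
  pose proof (IH (S i)). pose proof (tt_le0 Ch Ct q g i).
  assert (0 < / mu) by (apply Rinv_0_lt_compat; lra).
  assert (lam * xrec mu lam Ch Ct q g n (S i) <= 0) by nra.
  unfold Rdiv.
  assert ((lam * xrec mu lam Ch Ct q g n (S i) + tt Ch Ct q g i) * / mu <= 0 * / mu)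
    by (apply Rmult_le_compat_r; lra). lra. Qed.

Lemma xrec_zero mu lam Ch Ct q g : 0 < Ch -> forall n i, 0 <= Ch * INR i + q * Ct - g ->
  xrec mu lam Ch Ct q g n i = 0.
Proof. intros HCh n. induction n as [|n IH]; intros i Hi; simpl. reflexivity.
  rewrite IH. rewrite tt_zero by lra. unfold Rdiv; ring.
  rewrite S_INR. lra. Qed.

Definition Hyp (mu lam f q Ch Ct g : R) (M : nat) : Prop :=
  0 <= lam /\ 0 <= mu /\ 0 <= f /\ 0 <= q /\ lam + f - mu = q /\ mu <= f /\
  0 < Ch /\ 0 < Ct /\ g <= Ct /\ Ct < Ch * INR M /\ (mu = 0 -> g <= q * Ct).

Lemma Dg_le mu lam Ch Ct q g M i : 0 <= lam -> 0 < Ct -> Dg mu lam Ch Ct q g M i <= Ct.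
Proof. intros Hl HCt. unfold Dg. destruct (Nat.leb i M). 2: lra.
  destruct (Rlt_dec 0 mu). pose proof (xrec_le0 mu lam Ch Ct q g r Hl (S M - i) i). lra. lra. Qed.

Lemma Dg_ineq mu lam f q Ch Ct g M i : Hyp mu lam f q Ch Ct g M -> (1 <= i)%nat ->
  mu * Dg mu lam Ch Ct q g M i <= lam * Dg mu lam Ch Ct q g M (S i) + Ch * INR i + Ct * f - g.
Proof.
  intros (Hl & Hm & Hf & Hq & Hrel & Hmf & HCh & HCt & HgCt & HM & H0) Hi.
  unfold Dg.
  destruct (Nat.leb_spec i M) as [HiM|HiM]; destruct (Nat.leb_spec (S i) M) as [HSM|HSM].
  - destruct (Rlt_dec 0 mu) as [Hp|Hp].
    + replace (S M - i)%nat with (S (S M - S i)) by lia. simpl xrec.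
      set (Y := xrec mu lam Ch Ct q g (M - i) (S i)).
      pose proof (tt_le_a Ch Ct q g i).
      assert (E : mu * (Ct + (lam * Y + tt Ch Ct q g i) / mu) = mu * Ct + lam * Y + tt Ch Ct q g i)
        by (field; lra).
      rewrite E.
      assert (Eq : (lam + f - mu) * Ct = q * Ct) by (rewrite Hrel; reflexivity).
      assert (E2 : lam * (Ct + Y) + Ch * INR i + Ct * f - g - (mu * Ct + lam * Y + tt Ch Ct q g i)
        = (Ch * INR i + q * Ct - g) - tt Ch Ct q g i + ((lam + f - mu) * Ct - q * Ct)) by ring. lra.
    + assert (mu = 0) by lra. subst mu. specialize (H0 eq_refl).
      assert (0 <= Ch * INR i) by (apply Rmult_le_pos; [lra|apply pos_INR]). rewrite <- Hrel in H0.
      assert (E3 : lam * (Ct + 0) + Ct * f = (lam + f - 0) * Ct) by ring.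
      assert (E4 : 0 * (Ct + 0) = 0) by ring. lra.
  - assert (i = M) by lia. subst i.
    destruct (Rlt_dec 0 mu) as [Hp|Hp].
    + replace (S M - M)%nat with 1%nat by lia. simpl xrec.
      pose proof (tt_le0 Ch Ct q g M).
      assert (E : mu * (Ct + (lam * 0 + tt Ch Ct q g M) / mu) = mu * Ct + tt Ch Ct q g M)
        by (field; lra).
      rewrite E. assert (mu * Ct <= f * Ct) by (apply Rmult_le_compat_r; lra). lra.
    + assert (mu = 0) by lra. subst mu. assert (0 <= Ct * f) by (apply Rmult_le_pos; lra). lra.
  - lia.
  - assert (INR M <= INR i) by (apply le_INR; lia).
    assert (Ch * INR M <= Ch * INR i) by (apply Rmult_le_compat_l; lra).
    assert (0 <= Ct * f) by (apply Rmult_le_pos; lra). lra.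
Qed.

Lemma Dg_eq mu lam f q Ch Ct g M i : Hyp mu lam f q Ch Ct g M -> (1 <= i)%nat ->
  0 < mu -> Ch * INR i + q * Ct <= g ->
  lam * Dg mu lam Ch Ct q g M (S i) + Ch * INR i + Ct * f - g <= mu * Dg mu lam Ch Ct q g M i.
Proof.
  intros (Hl & Hm & Hf & Hq & Hrel & Hmf & HCh & HCt & HgCt & HM & H0) Hi Hp Hg.
  assert (HiM : (i < M)%nat).
  { apply INR_lt. assert (Ch * INR i < Ch * INR M) by nra. nra. }
  unfold Dg.
  destruct (Nat.leb_spec i M) as [_|]; [|lia].
  destruct (Nat.leb_spec (S i) M) as [_|]; [|lia].
  destruct (Rlt_dec 0 mu) as [_|]; [|lra].
  replace (S M - i)%nat with (S (S M - S i)) by lia. simpl xrec.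
  set (Y := xrec mu lam Ch Ct q g (M - i) (S i)).
  rewrite (tt_eq_a Ch Ct q g i) by lra.
  assert (E : mu * (Ct + (lam * Y + (Ch * INR i + q * Ct - g)) / mu) = mu * Ct + lam * Y + (Ch * INR i + q * Ct - g))
    by (field; lra).
  rewrite E.
  assert (Eq : (lam + f - mu) * Ct = q * Ct) by (rewrite Hrel; reflexivity).
  assert (E2 : lam * (Ct + Y) + Ch * INR i + Ct * f - g - (mu * Ct + lam * Y + (Ch * INR i + q * Ct - g))
        = ((lam + f - mu) * Ct - q * Ct)) by ring. lra.
Qed.

Lemma Dg_lt mu lam f q Ch Ct g M i : Hyp mu lam f q Ch Ct g M -> (1 <= i <= M)%nat ->
  Dg mu lam Ch Ct q g M i < Ct -> 0 < mu /\ Ch * INR i + q * Ct < g.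
Proof.
  intros (Hl & Hm & Hf & Hq & Hrel & Hmf & HCh & HCt & HgCt & HM & H0) Hi HD.
  unfold Dg in HD. destruct (Nat.leb_spec i M) as [_|]; [|lia].
  destruct (Rlt_dec 0 mu) as [Hp|Hp]; [|lra].
  split; auto.
  destruct (Rlt_dec (Ch * INR i + q * Ct) g) as [Hlt|Hge]; auto.
  rewrite xrec_zero in HD by lra. lra.
Qed.

Lemma Dg_g0 mu lam Ch Ct q M : 0 < Ch -> 0 <= q -> 0 < Ct -> (1 <= M)%nat ->
  Dg mu lam Ch Ct q 0 M 1 = Ct.
Proof. intros. unfold Dg. destruct (Nat.leb_spec 1 M); [|lia].
  destruct (Rlt_dec 0 mu). rewrite xrec_zero. ring. auto. simpl. nra. ring. Qed.

Lemma cont_xrec mu lam Ch Ct q : forall n i, continuity (fun g => xrec mu lam Ch Ct q g n i).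
Proof.
  induction n as [|n IH]; intro i; simpl.
  - apply continuity_const; intros u v; reflexivity.
  - apply continuity_mult. 2: apply continuity_const; intros u v; reflexivity.
    apply continuity_plus.
    apply continuity_mult. apply continuity_const; intros u v; reflexivity. apply IH.
    unfold tt.
    apply continuity_mult. 2: apply continuity_const; intros u v; reflexivity.
    apply continuity_minus.
    + apply continuity_minus. apply continuity_const; intros u v; reflexivity.
      apply derivable_continuous, derivable_id.
    + apply (continuity_comp (fun g => Ch * INR i + q * Ct - g) Rabs).
      apply continuity_minus. apply continuity_const; intros u v; reflexivity.
      apply derivable_continuous, derivable_id.
      apply Rcontinuity_abs.
Qed.

Lemma cont_Dg1 mu lam Ch Ct q M : continuity (fun g => Dg mu lam Ch Ct q g M 1).
Proof. unfold Dg. destruct (Nat.leb 1 M).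
  - destruct (Rlt_dec 0 mu). apply continuity_plus. apply continuity_const; intros u v; reflexivity.
    apply cont_xrec. apply continuity_const; intros u v; reflexivity.
  - apply continuity_const; intros u v; reflexivity.
Qed.


Fixpoint Pcum (D : nat -> R) (n : nat) : R :=
  match n with O => 0 | S n' => Pcum D n' + D (S n') end.

Definition arr (p1 p2 : R) (z : state) : list (R * state) :=
  let '(i, j) := z in
  [ ((1 - p1) * (1 - p2), (i, j)); (p1 * (1 - p2), (S i, j));
    ((1 - p1) * p2, (i, S j)); (p1 * p2, (S i, S j)) ].

Definition post (y : state) (a : bool) : state :=
  (fst y - act_nat a, snd y - act_nat a)%nat.

Lemma trans_post p1 p2 y a : trans p1 p2 y a = arr p1 p2 (post y a).
Proof. destruct y as [i j]. destruct a; unfold post; simpl.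
  - replace (Nat.max i 1) with (S (i - 1)) by lia.
    replace (Nat.max j 1) with (S (j - 1)) by lia. reflexivity.
  - rewrite !Nat.sub_0_r. reflexivity. Qed.

Lemma cost_post Ch Ct y a : cost Ch Ct y a = Ch * INR (fst (post y a) + snd (post y a)) + Ct * INR (act_nat a).
Proof. reflexivity. Qed.

Lemma lin4 a1 a2 a3 a4 x1 x2 x3 x4 y1 y2 y3 y4 c :
  0 <= a1 -> 0 <= a2 -> 0 <= a3 -> 0 <= a4 -> a1 + a2 + a3 + a4 = 1 ->
  x1 <= c + y1 -> x2 <= c + y2 -> x3 <= c + y3 -> x4 <= c + y4 ->
  a1 * x1 + (a2 * x2 + (a3 * x3 + (a4 * x4 + 0))) <= c + (a1 * y1 + (a2 * y2 + (a3 * y3 + (a4 * y4 + 0)))).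
Proof. intros. assert (a1 * x1 <= a1 * (c + y1)) by (apply Rmult_le_compat_l; auto).
  assert (a2 * x2 <= a2 * (c + y2)) by (apply Rmult_le_compat_l; auto).
  assert (a3 * x3 <= a3 * (c + y3)) by (apply Rmult_le_compat_l; auto).
  assert (a4 * x4 <= a4 * (c + y4)) by (apply Rmult_le_compat_l; auto).
  assert (E : a1 * (c + y1) + (a2 * (c + y2) + (a3 * (c + y3) + (a4 * (c + y4) + 0)))
    = c * (a1 + a2 + a3 + a4) + (a1 * y1 + (a2 * y2 + (a3 * y3 + (a4 * y4 + 0))))) by ring.
  rewrite H3 in E. lra. Qed.

Lemma lin4r a1 a2 a3 a4 x1 x2 x3 x4 y1 y2 y3 y4 c :
  0 <= a1 -> 0 <= a2 -> 0 <= a3 -> 0 <= a4 -> a1 + a2 + a3 + a4 = 1 ->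
  c + y1 <= x1 -> c + y2 <= x2 -> c + y3 <= x3 -> c + y4 <= x4 ->
  c + (a1 * y1 + (a2 * y2 + (a3 * y3 + (a4 * y4 + 0)))) <= a1 * x1 + (a2 * x2 + (a3 * x3 + (a4 * x4 + 0))).
Proof. intros. assert (a1 * (c + y1) <= a1 * x1) by (apply Rmult_le_compat_l; auto).
  assert (a2 * (c + y2) <= a2 * x2) by (apply Rmult_le_compat_l; auto).
  assert (a3 * (c + y3) <= a3 * x3) by (apply Rmult_le_compat_l; auto).
  assert (a4 * (c + y4) <= a4 * x4) by (apply Rmult_le_compat_l; auto).
  assert (E : a1 * (c + y1) + (a2 * (c + y2) + (a3 * (c + y3) + (a4 * (c + y4) + 0)))
    = c * (a1 + a2 + a3 + a4) + (a1 * y1 + (a2 * y2 + (a3 * y3 + (a4 * y4 + 0))))) by ring.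
  rewrite H3 in E. lra. Qed.

Lemma y_cases (i j : nat) : (0 < i * j)%nat \/ (i = 0 /\ j = 0)%nat \/ (j = 0 /\ 1 <= i)%nat \/ (i = 0 /\ 1 <= j)%nat.
Proof. destruct i, j; simpl; lia. Qed.

Section Model.
Variables p1 p2 Ch Ct g : R.
Variable M : nat.
Hypothesis Hp1 : 0 <= p1 <= 1.
Hypothesis Hp2 : 0 <= p2 <= 1.
Hypothesis HCh : 0 < Ch.
Hypothesis HCt : 0 < Ct.

Definition DP i := Dg ((1 - p1) * p2) (p1 * (1 - p2)) Ch Ct p1 g M i.
Definition DN j := Dg (p1 * (1 - p2)) ((1 - p1) * p2) Ch Ct p2 g M j.
Definition Kf (z : state) := Pcum DP (fst z) + Pcum DN (snd z).
Definition hh (y : state) : R :=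
  if Nat.ltb 0 (fst y * snd y) then Ct + Kf (fst y - 1, snd y - 1)%nat else Kf y.
Definition astar (y : state) : bool :=
  let '(i, j) := y in
  if Nat.ltb 0 (i * j) then true else if Nat.eqb (i + j) 0 then false
  else if Rlt_dec (if Nat.eqb j 0 then DP i else DN j) Ct then false else true.

Lemma hh_A i j : (0 < i * j)%nat -> hh (i, j) = Ct + Kf (i - 1, j - 1)%nat.
Proof. intro H. unfold hh. simpl. destruct (Nat.ltb_spec 0 (i * j)); [reflexivity | lia]. Qed.
Lemma hh_0 i j : (i * j = 0)%nat -> hh (i, j) = Kf (i, j).
Proof. intro H. unfold hh. simpl. destruct (Nat.ltb_spec 0 (i * j)); [lia | reflexivity]. Qed.
Lemma astar_A i j : (0 < i * j)%nat -> astar (i, j) = true.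
Proof. intro H. unfold astar. destruct (Nat.ltb_spec 0 (i * j)); [reflexivity | lia]. Qed.
Lemma astar_C i : (1 <= i)%nat -> astar (i, 0%nat) = if Rlt_dec (DP i) Ct then false else true.
Proof. intro H. unfold astar. rewrite Nat.mul_0_r. simpl.
  destruct (Nat.eqb_spec (i + 0) 0); [lia|]. reflexivity. Qed.
Lemma astar_D j : (1 <= j)%nat -> astar (0%nat, j) = if Rlt_dec (DN j) Ct then false else true.
Proof. intro H. unfold astar. simpl.
  destruct (Nat.eqb_spec j 0); [lia|]. reflexivity. Qed.

Hypothesis HgCt : g <= Ct.
Hypothesis HM : Ct < Ch * INR M.
Hypothesis HM1 : (1 <= M)%nat.
Hypothesis Hroot : g = p1 * (1 - p2) * DP 1 + (1 - p1) * p2 * DN 1 + p1 * p2 * Ct.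

Lemma DP_le i : DP i <= Ct.
Proof. apply Dg_le; auto. apply Rmult_le_pos; lra. Qed.
Lemma DN_le i : DN i <= Ct.
Proof. apply Dg_le; auto. apply Rmult_le_pos; lra. Qed.

Lemma HypP : Hyp ((1 - p1) * p2) (p1 * (1 - p2)) p2 p1 Ch Ct g M.
Proof. unfold Hyp. repeat split; try lra; try (apply Rmult_le_pos; lra).
  - assert (p1 * p2 >= 0) by (apply Rle_ge, Rmult_le_pos; lra). nra.
  - intro H0. rewrite Hroot, H0. pose proof (DP_le 1).
    assert (p1 * (1 - p2) * DP 1 <= p1 * (1 - p2) * Ct) by (apply Rmult_le_compat_l; [apply Rmult_le_pos|]; lra).
    assert (E : p1 * (1 - p2) * Ct + 0 * DN 1 + p1 * p2 * Ct = p1 * Ct) by ring. lra.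
Qed.

Lemma HypN : Hyp (p1 * (1 - p2)) ((1 - p1) * p2) p1 p2 Ch Ct g M.
Proof. unfold Hyp. repeat split; try lra; try (apply Rmult_le_pos; lra).
  - assert (p1 * p2 >= 0) by (apply Rle_ge, Rmult_le_pos; lra). nra.
  - intro H0. rewrite Hroot, H0. pose proof (DN_le 1).
    assert ((1 - p1) * p2 * DN 1 <= (1 - p1) * p2 * Ct) by (apply Rmult_le_compat_l; [apply Rmult_le_pos|]; lra).
    assert (E : 0 * DP 1 + (1 - p1) * p2 * Ct + p1 * p2 * Ct = p2 * Ct) by ring. lra.
Qed.


Lemma DP_ineq i : (1 <= i)%nat -> (1 - p1) * p2 * DP i <= p1 * (1 - p2) * DP (S i) + Ch * INR i + Ct * p2 - g.
Proof. intro Hi. exact (Dg_ineq _ _ _ _ _ _ _ _ i HypP Hi). Qed.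
Lemma DN_ineq i : (1 <= i)%nat -> p1 * (1 - p2) * DN i <= (1 - p1) * p2 * DN (S i) + Ch * INR i + Ct * p1 - g.
Proof. intro Hi. exact (Dg_ineq _ _ _ _ _ _ _ _ i HypN Hi). Qed.
Lemma DP_eq i : (1 <= i)%nat -> 0 < (1 - p1) * p2 -> Ch * INR i + p1 * Ct <= g ->
  p1 * (1 - p2) * DP (S i) + Ch * INR i + Ct * p2 - g <= (1 - p1) * p2 * DP i.
Proof. intros Hi H1 H2. exact (Dg_eq _ _ _ _ _ _ _ _ i HypP Hi H1 H2). Qed.
Lemma DN_eq i : (1 <= i)%nat -> 0 < p1 * (1 - p2) -> Ch * INR i + p2 * Ct <= g ->
  (1 - p1) * p2 * DN (S i) + Ch * INR i + Ct * p1 - g <= p1 * (1 - p2) * DN i.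
Proof. intros Hi H1 H2. exact (Dg_eq _ _ _ _ _ _ _ _ i HypN Hi H1 H2). Qed.
Lemma DP_lt i : (1 <= i <= M)%nat -> DP i < Ct -> 0 < (1 - p1) * p2 /\ Ch * INR i + p1 * Ct < g.
Proof. intros Hi H. exact (Dg_lt _ _ _ _ _ _ _ _ i HypP Hi H). Qed.
Lemma DN_lt i : (1 <= i <= M)%nat -> DN i < Ct -> 0 < p1 * (1 - p2) /\ Ch * INR i + p2 * Ct < g.
Proof. intros Hi H. exact (Dg_lt _ _ _ _ _ _ _ _ i HypN Hi H). Qed.

Definition sarr (z : state) (f : state -> R) : R :=
  let '(i, j) := z in
  (1 - p1) * (1 - p2) * f (i, j) + (p1 * (1 - p2) * f (S i, j) +
    ((1 - p1) * p2 * f (i, S j) + (p1 * p2 * f (S i, S j) + 0))).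
Lemma sarr_eq z f : sum_next (arr p1 p2 z) f = sarr z f.
Proof. destruct z; reflexivity. Qed.

Lemma PF_pos i : (1 <= i)%nat -> g + Kf (i, 0%nat) <= Ch * INR (i + 0) + sarr (i, 0%nat) hh.
Proof. intro Hi. destruct i as [|i]; [lia|]. unfold sarr.
  rewrite (hh_0 (S i) 0) by lia. rewrite (hh_0 (S (S i)) 0) by lia.
  rewrite (hh_A (S i) 1) by lia. rewrite (hh_A (S (S i)) 1) by lia.
  unfold Kf. simpl fst. simpl snd. try (replace (S i - 1)%nat with i by lia).
  try (replace (S (S i) - 1)%nat with (S i) by lia). try (replace (1 - 1)%nat with 0%nat by lia).
  rewrite ?Nat.sub_0_r. rewrite Nat.add_0_r. simpl Pcum.
  pose proof (DP_ineq (S i) Hi).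
  set (X := Pcum DP i) in *. set (D1 := DP (S i)) in *. set (D2 := DP (S (S i))) in *.
  assert (E : Ch * INR (S i) + ((1 - p1) * (1 - p2) * (X + D1 + 0) + (p1 * (1 - p2) * (X + D1 + D2 + 0) +
     ((1 - p1) * p2 * (Ct + (X + 0)) + (p1 * p2 * (Ct + (X + D1 + 0)) + 0)))) - (g + (X + D1 + 0))
     = p1 * (1 - p2) * D2 + Ch * INR (S i) + Ct * p2 - g - (1 - p1) * p2 * D1) by ring.
  lra.
Qed.

Lemma PF_neg j : (1 <= j)%nat -> g + Kf (0%nat, j) <= Ch * INR (0 + j) + sarr (0%nat, j) hh.
Proof. intro Hj. destruct j as [|j]; [lia|]. unfold sarr.
  rewrite (hh_0 0 (S j)) by lia. rewrite (hh_0 0 (S (S j))) by lia.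
  rewrite (hh_A 1 (S j)) by lia. rewrite (hh_A 1 (S (S j))) by lia.
  unfold Kf. simpl fst. simpl snd. try (replace (S j - 1)%nat with j by lia).
  try (replace (S (S j) - 1)%nat with (S j) by lia). try (replace (1 - 1)%nat with 0%nat by lia).
  rewrite ?Nat.sub_0_r. rewrite Nat.add_0_l. simpl Pcum.
  pose proof (DN_ineq (S j) Hj).
  set (X := Pcum DN j) in *. set (D1 := DN (S j)) in *. set (D2 := DN (S (S j))) in *.
  assert (E : Ch * INR (S j) + ((1 - p1) * (1 - p2) * (0 + (X + D1)) + (p1 * (1 - p2) * (Ct + (0 + X)) +
     ((1 - p1) * p2 * (0 + (X + D1 + D2)) + (p1 * p2 * (Ct + (0 + (X + D1))) + 0)))) - (g + (0 + (X + D1)))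
     = (1 - p1) * p2 * D2 + Ch * INR (S j) + Ct * p1 - g - p1 * (1 - p2) * D1) by ring.
  lra.
Qed.

Lemma PF_00 : g + Kf (0%nat, 0%nat) = Ch * INR (0 + 0) + sarr (0%nat, 0%nat) hh.
Proof. unfold sarr.
  rewrite (hh_0 0 0) by lia. rewrite (hh_0 1 0) by lia. rewrite (hh_0 0 1) by lia.
  rewrite (hh_A 1 1) by lia. unfold Kf. simpl. rewrite Hroot. ring. Qed.

Lemma PF z : (fst z = 0 \/ snd z = 0)%nat -> g + Kf z <= Ch * INR (fst z + snd z) + sarr z hh.
Proof. destruct z as [i j]. cbn [fst snd]. intro H.
  destruct (y_cases i j) as [A|[[-> ->]|[[-> Hi]|[-> Hj]]]].
  - destruct H; subst; [simpl in A | rewrite Nat.mul_0_r in A]; lia.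
  - rewrite PF_00; lra.
  - apply PF_pos; auto.
  - apply PF_neg; auto.
Qed.

Definition Gp i := (1 <= i)%nat /\ 0 < (1 - p1) * p2 /\ Ch * INR i + p1 * Ct <= g.
Definition Gn j := (1 <= j)%nat /\ 0 < p1 * (1 - p2) /\ Ch * INR j + p2 * Ct <= g.
Definition Gset (z : state) := (snd z = 0%nat /\ (fst z = 0%nat \/ Gp (fst z))) \/ (fst z = 0%nat /\ Gn (snd z)).

Lemma PFrev z : Gset z -> Ch * INR (fst z + snd z) + sarr z hh <= g + Kf z.
Proof. destruct z as [i j]. unfold Gset; cbn [fst snd].
  intros [[-> [-> | (Hi & Hmu & Hg)]] | [-> (Hj & Hl & Hg)]].
  - rewrite PF_00; lra.
  - destruct i as [|i]; [lia|]. unfold sarr.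
  rewrite (hh_0 (S i) 0) by lia. rewrite (hh_0 (S (S i)) 0) by lia.
  rewrite (hh_A (S i) 1) by lia. rewrite (hh_A (S (S i)) 1) by lia.
  unfold Kf. simpl fst. simpl snd. try (replace (S i - 1)%nat with i by lia).
  try (replace (S (S i) - 1)%nat with (S i) by lia). try (replace (1 - 1)%nat with 0%nat by lia).
  rewrite ?Nat.sub_0_r. rewrite Nat.add_0_r. simpl Pcum.
  pose proof (DP_eq (S i) Hi Hmu Hg).
  set (X := Pcum DP i) in *. set (D1 := DP (S i)) in *. set (D2 := DP (S (S i))) in *.
  assert (E : Ch * INR (S i) + ((1 - p1) * (1 - p2) * (X + D1 + 0) + (p1 * (1 - p2) * (X + D1 + D2 + 0) +
     ((1 - p1) * p2 * (Ct + (X + 0)) + (p1 * p2 * (Ct + (X + D1 + 0)) + 0)))) - (g + (X + D1 + 0))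
     = p1 * (1 - p2) * D2 + Ch * INR (S i) + Ct * p2 - g - (1 - p1) * p2 * D1) by ring.
  lra.
  - destruct j as [|j]; [lia|]. unfold sarr.
  rewrite (hh_0 0 (S j)) by lia. rewrite (hh_0 0 (S (S j))) by lia.
  rewrite (hh_A 1 (S j)) by lia. rewrite (hh_A 1 (S (S j))) by lia.
  unfold Kf. simpl fst. simpl snd. try (replace (S j - 1)%nat with j by lia).
  try (replace (S (S j) - 1)%nat with (S j) by lia). try (replace (1 - 1)%nat with 0%nat by lia).
  rewrite ?Nat.sub_0_r. rewrite Nat.add_0_l. simpl Pcum.
  pose proof (DN_eq (S j) Hj Hl Hg).
  set (X := Pcum DN j) in *. set (D1 := DN (S j)) in *. set (D2 := DN (S (S j))) in *.
  assert (E : Ch * INR (S j) + ((1 - p1) * (1 - p2) * (0 + (X + D1)) + (p1 * (1 - p2) * (Ct + (0 + X)) +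
     ((1 - p1) * p2 * (0 + (X + D1 + D2)) + (p1 * p2 * (Ct + (0 + (X + D1))) + 0)))) - (g + (0 + (X + D1)))
     = (1 - p1) * p2 * D2 + Ch * INR (S j) + Ct * p1 - g - p1 * (1 - p2) * D1) by ring.
  lra.
Qed.

Lemma minprop y a : (a = true -> (fst y + snd y <> 0)%nat) -> (a = false -> (fst y * snd y = 0)%nat) ->
  hh y <= Ct * INR (act_nat a) + Kf (post y a).
Proof. destruct y as [i j]; destruct a; intros Ht Hf; unfold post; cbn [fst snd act_nat] in *.
  - specialize (Ht eq_refl). simpl INR. rewrite Rmult_1_r.
    destruct (y_cases i j) as [A|[[-> ->]|[[-> Hi]|[-> Hj]]]].
    + rewrite hh_A by auto. lra.
    + lia.
    + rewrite hh_0 by lia. destruct i as [|i]; [lia|]. unfold Kf; cbn [fst snd].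
      simpl Pcum. rewrite Nat.sub_0_r. pose proof (DP_le (S i)). lra.
    + rewrite hh_0 by lia. destruct j as [|j]; [lia|]. unfold Kf; cbn [fst snd].
      simpl Pcum. rewrite Nat.sub_0_r. pose proof (DN_le (S j)). lra.
  - specialize (Hf eq_refl). simpl INR. rewrite !Nat.sub_0_r. rewrite hh_0 by auto. lra.
Qed.

Lemma minprop_eq y : Ct * INR (act_nat (astar y)) + Kf (post y (astar y)) = hh y.
Proof. destruct y as [i j].
  destruct (y_cases i j) as [A|[[-> ->]|[[-> Hi]|[-> Hj]]]].
  - rewrite astar_A by auto. rewrite hh_A by auto. unfold post; cbn [fst snd act_nat]. simpl INR. ring.
  - unfold astar. simpl. unfold hh, post. simpl. ring.
  - rewrite astar_C by auto. rewrite hh_0 by lia. destruct (Rlt_dec (DP i) Ct).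
    + unfold post; cbn [fst snd act_nat]. simpl INR. rewrite !Nat.sub_0_r. ring.
    + pose proof (DP_le i). destruct i as [|i]; [lia|]. unfold post, Kf; cbn [fst snd act_nat]. simpl INR.
      simpl Pcum. rewrite Nat.sub_0_r. lra.
  - rewrite astar_D by auto. rewrite hh_0 by lia. destruct (Rlt_dec (DN j) Ct).
    + unfold post; cbn [fst snd act_nat]. simpl INR. rewrite !Nat.sub_0_r. ring.
    + pose proof (DN_le j). destruct j as [|j]; [lia|]. unfold post, Kf; cbn [fst snd act_nat]. simpl INR.
      simpl Pcum. rewrite Nat.sub_0_r. lra.
Qed.

Lemma Gp_lt i : Gp i -> (i < M)%nat.
Proof. intros (Hi & Hm & Hg). apply INR_lt. apply (Rmult_lt_reg_l Ch); auto.
  assert (0 <= p1 * Ct) by (apply Rmult_le_pos; lra). lra. Qed.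
Lemma Gn_lt j : Gn j -> (j < M)%nat.
Proof. intros (Hi & Hm & Hg). apply INR_lt. apply (Rmult_lt_reg_l Ch); auto.
  assert (0 <= p2 * Ct) by (apply Rmult_le_pos; lra). lra. Qed.
Lemma Gp_down i : Gp i -> (i - 1 = 0)%nat \/ Gp (i - 1).
Proof. intros (Hi & Hm & Hg). destruct (Nat.eq_dec (i - 1) 0) as [E|E]; [left; auto|right].
  split; [lia|split; auto]. assert (INR (i - 1) <= INR i) by (apply le_INR; lia).
  assert (Ch * INR (i - 1) <= Ch * INR i) by (apply Rmult_le_compat_l; lra). lra. Qed.
Lemma Gn_down j : Gn j -> (j - 1 = 0)%nat \/ Gn (j - 1).
Proof. intros (Hi & Hm & Hg). destruct (Nat.eq_dec (j - 1) 0) as [E|E]; [left; auto|right].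
  split; [lia|split; auto]. assert (INR (j - 1) <= INR j) by (apply le_INR; lia).
  assert (Ch * INR (j - 1) <= Ch * INR j) by (apply Rmult_le_compat_l; lra). lra. Qed.

Definition good (s : state) := ((fst s <= 1 \/ snd s <= 1)%nat) /\ Gset (post s (astar s)).

Lemma good_i0 i : (1 <= i)%nat -> (i = 0%nat \/ Gp i) -> ((i - 1)%nat = 0%nat \/ Gp (i - 1)) -> good (i, 0%nat).
Proof. intros Hi H1 H2. split; [cbn; lia|]. rewrite astar_C by auto.
  destruct (Rlt_dec (DP i) Ct); unfold post, Gset; cbn [fst snd act_nat]; rewrite ?Nat.sub_0_r; left; auto. Qed.
Lemma good_0j j : (1 <= j)%nat -> (j = 0%nat \/ Gn j) -> ((j - 1)%nat = 0%nat \/ Gn (j - 1)) -> good (0%nat, j).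
Proof. intros Hj H1 H2. split; [cbn; lia|]. rewrite astar_D by auto.
  destruct (Rlt_dec (DN j) Ct); unfold post, Gset; cbn [fst snd act_nat]; rewrite ?Nat.sub_0_r.
  - destruct H1 as [->|H1]; [lia|]. right; auto.
  - destruct H2 as [->|H2]; [left; auto|right; auto]. Qed.
Lemma good_A i j : (0 < i * j)%nat -> (i <= 1 \/ j <= 1)%nat -> Gset (i - 1, j - 1)%nat -> good (i, j).
Proof. intros. split; auto. rewrite astar_A by auto. exact H1. Qed.

Lemma closure i j : Gset (i, j) -> good (i, j) /\ good (S i, j) /\ good (i, S j) /\ good (S i, S j).
Proof. unfold Gset at 1; cbn [fst snd].
  intros [[-> [-> | Gi]] | [-> Gj]].
  - split; [|split; [|split]].
    + split; [cbn; lia|]. unfold astar; simpl. unfold post, Gset; simpl. left; auto.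
    + destruct (Rlt_dec (DP 1) Ct) as [H|H].
      * apply DP_lt in H; [|lia]. apply good_i0; auto. right. split; [lia|]. destruct H; split; lra.
      * split; [cbn; lia|]. rewrite astar_C by lia. destruct (Rlt_dec (DP 1) Ct); [contradiction|].
        unfold post, Gset; simpl. left; auto.
    + destruct (Rlt_dec (DN 1) Ct) as [H|H].
      * apply DN_lt in H; [|lia]. apply good_0j; auto. right. split; [lia|]. destruct H; split; lra.
      * split; [cbn; lia|]. rewrite astar_D by lia. destruct (Rlt_dec (DN 1) Ct); [contradiction|].
        unfold post, Gset; simpl. left; auto.
    + apply good_A; simpl; try lia. unfold Gset; simpl; left; auto.
  - pose proof (Gp_lt i Gi) as Hlt. pose proof (Gp_down i Gi) as Gd. destruct Gi as (Hi & Hm & Hg).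
    split; [|split; [|split]].
    + apply good_i0; auto. right; repeat split; auto.
    + destruct (Rlt_dec (DP (S i)) Ct) as [H|H].
      * apply DP_lt in H; [|lia]. apply good_i0; [lia| |].
        right. split; [lia|]. destruct H; split; lra.
        simpl. rewrite Nat.sub_0_r. right; repeat split; auto.
      * split; [cbn; lia|]. rewrite astar_C by lia. destruct (Rlt_dec (DP (S i)) Ct); [contradiction|].
        unfold post, Gset; cbn [fst snd act_nat]. simpl. rewrite Nat.sub_0_r. left; split; auto. right; repeat split; auto.
    + apply good_A; [rewrite Nat.mul_1_r; lia | cbn; lia | ].
      unfold Gset; cbn [fst snd]. left; split; [reflexivity | exact Gd].
    + apply good_A; try (simpl; lia). simpl. rewrite Nat.sub_0_r.
      unfold Gset; cbn [fst snd]. left; split; auto. right; repeat split; auto.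
  - pose proof (Gn_lt j Gj) as Hlt. pose proof (Gn_down j Gj) as Gd. destruct Gj as (Hj & Hl & Hg).
    split; [|split; [|split]].
    + apply good_0j; auto. right; repeat split; auto.
    + apply good_A; [simpl; lia | cbn; lia | ].
      unfold Gset; cbn [fst snd]. destruct Gd as [Gd|Gd]; [left; split; [exact Gd|left; reflexivity] | right; split; [reflexivity|exact Gd]].
    + destruct (Rlt_dec (DN (S j)) Ct) as [H|H].
      * apply DN_lt in H; [|lia]. apply good_0j; [lia| |].
        right. split; [lia|]. destruct H; split; lra.
        simpl. rewrite Nat.sub_0_r. right; repeat split; auto.
      * split; [cbn; lia|]. rewrite astar_D by lia. destruct (Rlt_dec (DN (S j)) Ct); [contradiction|].
        unfold post, Gset; cbn [fst snd act_nat]. simpl. rewrite Nat.sub_0_r. right; split; auto. repeat split; auto.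
    + apply good_A; try (simpl; lia). simpl. rewrite Nat.sub_0_r.
      unfold Gset; cbn [fst snd]. right; split; auto. repeat split; auto.
Qed.

Lemma ph_facts : 0 <= (1 - p1) * (1 - p2) /\ 0 <= p1 * (1 - p2) /\ 0 <= (1 - p1) * p2 /\ 0 <= p1 * p2 /\
  (1 - p1) * (1 - p2) + p1 * (1 - p2) + (1 - p1) * p2 + p1 * p2 = 1.
Proof. repeat split; try (apply Rmult_le_pos; lra). ring. Qed.

Definition inS (y : state) := (fst y <= 1 \/ snd y <= 1)%nat.
Definition allowed (y : state) (a : bool) :=
  (a = true -> (fst y + snd y <> 0)%nat) /\ (a = false -> (fst y * snd y = 0)%nat).

Lemma post_zero y a : inS y -> allowed y a -> (fst (post y a) = 0 \/ snd (post y a) = 0)%nat.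
Proof. destruct y as [i j]; unfold inS, allowed, post; cbn [fst snd]. intros HS [Ht Hf].
  destruct a; cbn [act_nat].
  - lia.
  - specialize (Hf eq_refl). rewrite !Nat.sub_0_r. apply Nat.mul_eq_0 in Hf. lia. Qed.

Lemma act_lower y a c f : inS y -> allowed y a -> (forall s, inS s -> c + hh s <= f s) ->
  c + g + hh y <= cost Ch Ct y a + sum_next (trans p1 p2 y a) f.
Proof. intros HS Ha Hf. rewrite trans_post, cost_post, sarr_eq.
  pose proof (post_zero y a HS Ha) as Hz.
  pose proof (PF (post y a) Hz) as HPF.
  pose proof (minprop y a (proj1 Ha) (proj2 Ha)) as Hm.
  assert (c + sarr (post y a) hh <= sarr (post y a) f).
  { destruct (post y a) as [i j]. cbn [fst snd] in Hz. destruct ph_facts as (? & ? & ? & ? & ?).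
    unfold sarr. apply lin4r; auto; apply Hf; unfold inS; cbn [fst snd]; lia. }
  lra.
Qed.

Lemma act_upper y c f : good y -> (forall s, good s -> f s <= c + hh s) ->
  cost Ch Ct y (astar y) + sum_next (trans p1 p2 y (astar y)) f <= c + g + hh y.
Proof. intros [HS HG] Hf. rewrite trans_post, cost_post, sarr_eq.
  pose proof (PFrev _ HG) as HPF.
  pose proof (minprop_eq y) as Hm.
  assert (sarr (post y (astar y)) f <= c + sarr (post y (astar y)) hh).
  { destruct (post y (astar y)) as [i j]. destruct (closure i j HG) as (G1 & G2 & G3 & G4).
    destruct ph_facts as (? & ? & ? & ? & ?).
    unfold sarr. apply lin4; auto. }
  lra.
Qed.

Lemma combine q T X1 X0 : 0 <= q <= 1 -> (0 < q -> T <= X1) -> (q < 1 -> T <= X0) -> T <= q * X1 + (1 - q) * X0.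
Proof. intros Hq H1 H0.
  assert (q * T <= q * X1).
  { destruct (Rlt_or_le 0 q). apply Rmult_le_compat_l; auto; lra. replace q with 0 by lra. lra. }
  assert ((1 - q) * T <= (1 - q) * X0).
  { destruct (Rlt_or_le q 1). apply Rmult_le_compat_l; auto; lra. replace q with 1 by lra. lra. }
  assert (E : T = q * T + (1 - q) * T) by ring. lra. Qed.

Lemma ecost_0 u h y : ecost p1 p2 Ch Ct u 0 h y = u h y * cost Ch Ct y true + (1 - u h y) * cost Ch Ct y false.
Proof. reflexivity. Qed.
Lemma ecost_S u N h y : ecost p1 p2 Ch Ct u (S N) h y =
  u h y * (cost Ch Ct y true + sum_next (trans p1 p2 y true) (fun y' => ecost p1 p2 Ch Ct u N (h ++ [(y, true)]) y'))
  + (1 - u h y) * (cost Ch Ct y false + sum_next (trans p1 p2 y false) (fun y' => ecost p1 p2 Ch Ct u N (h ++ [(y, false)]) y')).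
Proof. reflexivity. Qed.

Lemma sum_next_zero (l : list (R * state)) : sum_next l (fun _ => 0) = 0.
Proof. induction l as [|[q s] l IH]; simpl. reflexivity. rewrite IH. ring. Qed.

Lemma lower_bound u Hmax : admissible u -> (forall s, hh s <= Hmax) ->
  forall N hist y, inS y -> INR (S N) * g + hh y - Hmax <= ecost p1 p2 Ch Ct u N hist y.
Proof. intros Hu HH N. induction N as [|N IH]; intros hist y HS;
  destruct (Hu hist y) as (Hq & Hz & Hp).
  - rewrite ecost_0. apply combine; auto.
    + intro Hq0. assert (Ha : allowed y true).
      { split; intro E; [|discriminate]. intro E2. specialize (Hz E2). lra. }
      pose proof (act_lower y true (- Hmax) (fun _ => 0) HS Ha) as A.
      rewrite sum_next_zero in A. simpl INR. assert (forall s, inS s -> - Hmax + hh s <= 0) as B.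
      { intros s _. specialize (HH s). lra. }
      specialize (A B). lra.
    + intro Hq1. assert (Ha : allowed y false).
      { split; intro E; [discriminate|]. destruct (Nat.eq_dec (fst y * snd y) 0) as [|E2]; auto.
        assert (0 < fst y * snd y)%nat by lia. specialize (Hp H). lra. }
      pose proof (act_lower y false (- Hmax) (fun _ => 0) HS Ha) as A.
      rewrite sum_next_zero in A. simpl INR. assert (forall s, inS s -> - Hmax + hh s <= 0) as B.
      { intros s _. specialize (HH s). lra. }
      specialize (A B). lra.
  - rewrite ecost_S. apply combine; auto.
    + intro Hq0. assert (Ha : allowed y true).
      { split; intro E; [|discriminate]. intro E2. specialize (Hz E2). lra. }
      pose proof (act_lower y true (INR (S N) * g - Hmax) (fun y' => ecost p1 p2 Ch Ct u N (hist ++ [(y, true)]) y') HS Ha) as A.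
      assert (B : forall s, inS s -> INR (S N) * g - Hmax + hh s <= ecost p1 p2 Ch Ct u N (hist ++ [(y, true)]) s)
        by (intros s Hs; specialize (IH (hist ++ [(y, true)]) s Hs); lra).
      specialize (A B). rewrite (S_INR (S N)). lra.
    + intro Hq1. assert (Ha : allowed y false).
      { split; intro E; [discriminate|]. destruct (Nat.eq_dec (fst y * snd y) 0) as [|E2]; auto.
        assert (0 < fst y * snd y)%nat by lia. specialize (Hp H). lra. }
      pose proof (act_lower y false (INR (S N) * g - Hmax) (fun y' => ecost p1 p2 Ch Ct u N (hist ++ [(y, false)]) y') HS Ha) as A.
      assert (B : forall s, inS s -> INR (S N) * g - Hmax + hh s <= ecost p1 p2 Ch Ct u N (hist ++ [(y, false)]) s)
        by (intros s Hs; specialize (IH (hist ++ [(y, false)]) s Hs); lra).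
      specialize (A B). rewrite (S_INR (S N)). lra.
Qed.

Definition ustar : policy := fun _ y => if astar y then 1 else 0.

Lemma upper_bound Hmin : (forall s, Hmin <= hh s) ->
  forall N hist y, good y -> ecost p1 p2 Ch Ct ustar N hist y <= INR (S N) * g + hh y - Hmin.
Proof. intros HH N. induction N as [|N IH]; intros hist y HG.
  - rewrite ecost_0. pose proof (act_upper y (- Hmin) (fun _ => 0) HG) as A.
    rewrite sum_next_zero in A.
    assert (forall s, good s -> 0 <= - Hmin + hh s) as B. { intros s _. specialize (HH s). lra. }
    specialize (A B). unfold ustar. simpl INR. destruct (astar y); lra.
  - rewrite ecost_S. pose proof (act_upper y (INR (S N) * g - Hmin) (fun y' => ecost p1 p2 Ch Ct ustar N (hist ++ [(y, astar y)]) y') HG) as A.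
    assert (B : forall s, good s -> ecost p1 p2 Ch Ct ustar N (hist ++ [(y, astar y)]) s <= INR (S N) * g - Hmin + hh s).
    { intros s Hs. specialize (IH (hist ++ [(y, astar y)]) s Hs). lra. }
    specialize (A B). rewrite (S_INR (S N)).
    assert (Eu : ustar hist y = if astar y then 1 else 0) by reflexivity. rewrite Eu.
    destruct (astar y); lra.
Qed.

End Model.


Fixpoint Pabs (D : nat -> R) (n : nat) : R :=
  match n with O => 0 | S n' => Pabs D n' + Rabs (D (S n')) end.

Lemma Pcum_abs D n : Rabs (Pcum D n) <= Pabs D n.
Proof. induction n as [|n IH]; simpl. rewrite Rabs_R0; lra.
  pose proof (Rabs_triang (Pcum D n) (D (S n))). lra. Qed.

Lemma Pabs_mono D n k : Pabs D n <= Pabs D (n + k).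
Proof. induction k as [|k IH]. rewrite Nat.add_0_r; lra.
  rewrite Nat.add_succ_r. simpl. pose proof (Rabs_pos (D (S (n + k)))). lra. Qed.

Lemma Pcum_const D M : (forall i, (M < i)%nat -> D i = 0) -> forall k, Pcum D (M + k) = Pcum D M.
Proof. intros HD k. induction k as [|k IH]. rewrite Nat.add_0_r; auto.
  rewrite Nat.add_succ_r. simpl. rewrite IH, HD by lia. ring. Qed.

Lemma Pcum_bound D M : (forall i, (M < i)%nat -> D i = 0) -> forall n, Rabs (Pcum D n) <= Pabs D M.
Proof. intros HD n. destruct (Nat.le_gt_cases n M) as [H|H].
  - replace M with (n + (M - n))%nat by lia. pose proof (Pabs_mono D n (M - n)). pose proof (Pcum_abs D n). lra.
  - replace n with (M + (n - M))%nat by lia. rewrite Pcum_const by auto. apply Pcum_abs. Qed.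

Lemma Dg_zero mu lam Ch Ct q g M i : (M < i)%nat -> Dg mu lam Ch Ct q g M i = 0.
Proof. intro H. unfold Dg. destruct (Nat.leb_spec i M); [lia|reflexivity]. Qed.

Lemma hh_bounds p1 p2 Ch Ct g M : 0 < Ct -> exists Hmin Hmax, forall s,
  Hmin <= hh p1 p2 Ch Ct g M s <= Hmax.
Proof. intro HCt.
  set (BP := Pabs (DP p1 p2 Ch Ct g M) M). set (BN := Pabs (DN p1 p2 Ch Ct g M) M).
  assert (HP : forall n, Rabs (Pcum (DP p1 p2 Ch Ct g M) n) <= BP).
  { apply Pcum_bound. intros. unfold DP. apply Dg_zero; auto. }
  assert (HN : forall n, Rabs (Pcum (DN p1 p2 Ch Ct g M) n) <= BN).
  { apply Pcum_bound. intros. unfold DN. apply Dg_zero; auto. }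
  assert (HK : forall z, - (BP + BN) <= Kf p1 p2 Ch Ct g M z <= BP + BN).
  { intro z. unfold Kf. specialize (HP (fst z)). specialize (HN (snd z)).
    apply Rabs_le_between in HP. apply Rabs_le_between in HN. lra. }
  exists (- (BP + BN)), (Ct + (BP + BN)). intro s. unfold hh.
  destruct (Nat.ltb 0 (fst s * snd s)).
  - specialize (HK ((fst s - 1)%nat, (snd s - 1)%nat)). lra.
  - specialize (HK s). lra.
Qed.


Lemma lim_c_over (c : R) : is_lim_seq (fun n => c / INR (S n)) 0.
Proof.
  assert (H1 : is_lim_seq (fun n => INR (S n)) p_infty) by (apply (proj1 (is_lim_seq_incr_1 INR p_infty)), is_lim_seq_INR).
  assert (H2 : is_lim_seq (fun n => / INR (S n)) 0).
  { replace (Finite 0) with (Rbar_inv p_infty) by reflexivity. apply is_lim_seq_inv; auto. discriminate. }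
  pose proof (is_lim_seq_scal_l _ c _ H2) as H3. simpl in H3. rewrite Rmult_0_r in H3.
  apply (is_lim_seq_ext _ _ _ (fun n => eq_refl) H3).
Qed.

Lemma lim_g_plus (g c : R) : is_lim_seq (fun n => g + c / INR (S n)) g.
Proof. pose proof (is_lim_seq_plus' _ _ g 0 (is_lim_seq_const g) (lim_c_over c)) as H.
  rewrite Rplus_0_r in H. exact H. Qed.

Lemma div_bounds E k g c : 0 < k -> c <= E - k * g -> g + c / k <= E / k.
Proof. intros Hk H. assert (E / k = g + (E - k * g) / k) by (field; lra). rewrite H0.
  apply Rplus_le_compat_l. apply Rmult_le_compat_r. left; apply Rinv_0_lt_compat; auto. auto. Qed.
Lemma div_bounds' E k g c : 0 < k -> E - k * g <= c -> E / k <= g + c / k.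
Proof. intros Hk H. assert (E / k = g + (E - k * g) / k) by (field; lra). rewrite H0.
  apply Rplus_le_compat_l. apply Rmult_le_compat_r. left; apply Rinv_0_lt_compat; auto. auto. Qed.

Definition Fg p1 p2 Ch Ct M (g : R) : R :=
  p1 * (1 - p2) * DP p1 p2 Ch Ct g M 1 + (1 - p1) * p2 * DN p1 p2 Ch Ct g M 1 + p1 * p2 * Ct - g.

Theorem theorem2 (p1 p2 Ch Ct : R) :
  0 <= p1 <= 1 -> 0 <= p2 <= 1 -> 0 < Ch -> 0 < Ct ->
  exists ustar : policy,
    admissible ustar /\ stationary ustar /\
    ex_lim_seq (avg_cost p1 p2 Ch Ct ustar) /\
    forall u : policy, admissible u ->
      Rbar_le (V p1 p2 Ch Ct ustar) (V p1 p2 Ch Ct u).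
Proof.
  intros Hp1 Hp2 HCh HCt.
  destruct (archimed_cor1 (Ch / Ct)) as [M [HM0 HM1]].
  { apply Rdiv_lt_0_compat; auto. }
  assert (HINR : 0 < INR M) by (apply lt_0_INR; auto).
  assert (HM : Ct < Ch * INR M).
  { apply (Rmult_lt_reg_r (/ Ct)). apply Rinv_0_lt_compat; auto.
    replace (Ct * / Ct) with 1 by (field; lra).
    apply (Rmult_lt_reg_r (/ INR M)). apply Rinv_0_lt_compat; auto.
    replace (Ch * INR M * / Ct * / INR M) with (Ch / Ct) by (field; lra). lra. }
  assert (HM1' : (1 <= M)%nat) by lia.
  assert (Hcont : continuity (Fg p1 p2 Ch Ct M)).
  { unfold Fg. apply continuity_minus; [| apply derivable_continuous, derivable_id].
    apply continuity_plus; [| apply continuity_const; intros u v; reflexivity].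
    apply continuity_plus.
    - apply continuity_mult; [apply continuity_const; intros u v; reflexivity|]. unfold DP. apply cont_Dg1.
    - apply continuity_mult; [apply continuity_const; intros u v; reflexivity|]. unfold DN. apply cont_Dg1. }
  assert (ph : 0 <= (1 - p1) * (1 - p2) /\ 0 <= p1 * (1 - p2) /\ 0 <= (1 - p1) * p2 /\ 0 <= p1 * p2)
    by (repeat split; apply Rmult_le_pos; lra).
  destruct ph as (ph1 & ph2 & ph3 & ph4).
  assert (F0 : 0 <= Fg p1 p2 Ch Ct M 0).
  { unfold Fg, DP, DN. rewrite !Dg_g0 by (auto; lra).
    assert (0 <= p1 * (1 - p2) * Ct) by (apply Rmult_le_pos; lra).
    assert (0 <= (1 - p1) * p2 * Ct) by (apply Rmult_le_pos; lra).
    assert (0 <= p1 * p2 * Ct) by (apply Rmult_le_pos; lra). lra. }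
  assert (FCt : Fg p1 p2 Ch Ct M Ct <= 0).
  { unfold Fg. pose proof (Dg_le ((1 - p1) * p2) (p1 * (1 - p2)) Ch Ct p1 Ct M 1 ph2 HCt).
    pose proof (Dg_le (p1 * (1 - p2)) ((1 - p1) * p2) Ch Ct p2 Ct M 1 ph3 HCt).
    unfold DP, DN.
    assert (p1 * (1 - p2) * Dg ((1 - p1) * p2) (p1 * (1 - p2)) Ch Ct p1 Ct M 1 <= p1 * (1 - p2) * Ct)
      by (apply Rmult_le_compat_l; auto).
    assert ((1 - p1) * p2 * Dg (p1 * (1 - p2)) ((1 - p1) * p2) Ch Ct p2 Ct M 1 <= (1 - p1) * p2 * Ct)
      by (apply Rmult_le_compat_l; auto).
    assert (E : p1 * (1 - p2) * Ct + (1 - p1) * p2 * Ct + p1 * p2 * Ct - Ct = - ((1 - p1) * (1 - p2) * Ct)) by ring.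
    assert (0 <= (1 - p1) * (1 - p2) * Ct) by (apply Rmult_le_pos; lra). lra. }
  destruct (IVT_gen (Fg p1 p2 Ch Ct M) 0 Ct 0 Hcont) as [g [Hgr Hg0]].
  { rewrite Rmin_right, Rmax_left by lra. lra. }
  rewrite Rmin_left, Rmax_right in Hgr by lra.
  assert (Hroot : g = p1 * (1 - p2) * DP p1 p2 Ch Ct g M 1 + (1 - p1) * p2 * DN p1 p2 Ch Ct g M 1 + p1 * p2 * Ct).
  { unfold Fg in Hg0. lra. }
  assert (HgCt : g <= Ct) by lra.
  destruct (hh_bounds p1 p2 Ch Ct g M HCt) as [Hmin [Hmax Hb]].
  assert (Hadm : admissible (ustar p1 p2 Ch Ct g M)).
  { intros h [i j]. unfold ustar. cbn [fst snd]. split; [|split].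
    - destruct (astar _ _ _ _ _ _ _); lra.
    - intro E. assert (i = 0%nat /\ j = 0%nat) as [-> ->] by lia. reflexivity.
    - intro E. rewrite astar_A by auto. reflexivity. }
  exists (ustar p1 p2 Ch Ct g M). split; [exact Hadm|]. split.
  { exists (fun y => ustar p1 p2 Ch Ct g M [] y). intros; reflexivity. }
  assert (Hlow : forall u, admissible u -> forall n,
    g + (0 - Hmax) / INR (S n) <= avg_cost p1 p2 Ch Ct u n).
  { intros u Hu n. unfold avg_cost. apply div_bounds. apply lt_0_INR; lia.
    pose proof (lower_bound p1 p2 Ch Ct g M Hp1 Hp2 HCh HCt HgCt HM HM1' Hroot u Hmax Hu
      (fun s => proj2 (Hb s)) n [] (0%nat, 0%nat)) as L.
    assert (inS (0%nat, 0%nat)) as HS by (unfold inS; simpl; lia). specialize (L HS).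
    assert (hh p1 p2 Ch Ct g M (0%nat, 0%nat) = 0) as H0 by (unfold hh, Kf; simpl; ring).
    rewrite H0 in L. lra. }
  assert (Hup : forall n, avg_cost p1 p2 Ch Ct (ustar p1 p2 Ch Ct g M) n <= g + (0 - Hmin) / INR (S n)).
  { intros n. unfold avg_cost. apply div_bounds'. apply lt_0_INR; lia.
    pose proof (upper_bound p1 p2 Ch Ct g M Hp1 Hp2 HCh HCt HgCt HM HM1' Hroot Hmin
      (fun s => proj1 (Hb s)) n [] (0%nat, 0%nat)) as U.
    assert (good p1 p2 Ch Ct g M (0%nat, 0%nat)) as HG.
    { split. unfold inS; simpl; lia. unfold astar; simpl. unfold post, Gset; simpl. left; auto. }
    specialize (U HG).
    assert (hh p1 p2 Ch Ct g M (0%nat, 0%nat) = 0) as H0 by (unfold hh, Kf; simpl; ring).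
    rewrite H0 in U. lra. }
  assert (Hlim : is_lim_seq (avg_cost p1 p2 Ch Ct (ustar p1 p2 Ch Ct g M)) g).
  { apply (is_lim_seq_le_le (fun n => g + (0 - Hmax) / INR (S n)) _ (fun n => g + (0 - Hmin) / INR (S n))).
    intro n; split; [apply Hlow; auto | apply Hup].
    apply lim_g_plus. apply lim_g_plus. }
  split. { exists (Finite g). exact Hlim. }
  intros u Hu. unfold V.
  rewrite (is_LimSup_seq_unique _ _ (is_lim_LimSup_seq _ _ Hlim)).
  rewrite <- (is_LimSup_seq_unique _ _ (is_lim_LimSup_seq _ _ (lim_g_plus g (0 - Hmax)))).
  apply LimSup_le. exists 0%nat. intros n _. apply Hlow; auto.
Qed.
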